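(* For every $(\overline{u}_{T,k+1/2})_{k=1}^4\in\mathbb{R}^4$, the matrix $\boldsymbol{A}$ is a nonsingular M-matrix (in particular strictly diagonally dominant, with $\boldsymbol{A}^{-1}$ entrywise nonnegative), and the matrix $\boldsymbol{C}:=\boldsymbol{A}^{-1}\boldsymbol{B}$ is entrywise nonnegative and satisfies $\sum_{j=1}^4 c_{ij}=1$ for every $i\in\{1,\dots,4\}$.
   Context: Indices in $\{1,2,3,4\}$ are taken cyclically mod 4. Limiter: $\varphi(r)=\dfrac{r^4+r^3+r^2+r}{r^4+r^3+r^2+r+1}$ for $r\ge0$. Given total velocities $\overline{u}_{T,k+1/2}\in\mathbb{R}$, $k=1,\dots,4$, define $\overline{\omega}^V_{k+1/2}=\varphi(\max(0,\overline{u}_{T,k-1/2}/\overline{u}_{T,k+1/2}))$ if $\overline{u}_{T,k+1/2}>0$, $=\varphi(\max(0,\overline{u}_{T,k+3/2}/\overline{u}_{T,k+1/2}))$ if $\overline{u}_{T,k+1/2}<0$, and $=0$ if $\overline{u}_{T,k+1/2}=0$. The $4\times4$ matrix $\boldsymbol{A}=(a_{ij})$ has $a_{kk}=1$, $a_{k,k-1}=-\overline{\omega}^V_{k+1/2}$ if $\overline{u}_{T,k+1/2}\ge0$ (else $0$), $a_{k,k+1}=-\overline{\omega}^V_{k+1/2}$ if $\overline{u}_{T,k+1/2}<0$ (else $0$), and all other entries $0$. The $4\times4$ matrix $\boldsymbol{B}=(b_{ij})$ has $b_{kk}=1-\overline{\omega}^V_{k+1/2}$ if $\overline{u}_{T,k+1/2}\ge0$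 (else $0$), $b_{k,k+1}=1-\overline{\omega}^V_{k+1/2}$ if $\overline{u}_{T,k+1/2}<0$ (else $0$), and all other entries $0$. *)

(* Defs.v *)
(* the statement is purely algebraic/order-theoretic,
   stated over an arbitrary real field R (covers the real numbers). *)
From HB Require Import structures.
From mathcomp Require Import all_boot all_order all_algebra.
Set Implicit Arguments. Unset Strict Implicit. Unset Printing Implicit Defensive.
Import Order.TTheory GRing.Theory Num.Theory.
Local Open Scope ring_scope.

(* Indices k = 1..4 are represented by 'I_4 = {0,..,3}; cyclic shifts mod 4
   are ordS (k+1) and ord_pred (k-1).  u k stands for  u_{T,k+1/2}. *)

Definition limiter {R : realFieldType} (r : R) : R :=
  (r ^+ 4 + r ^+ 3 + r ^+ 2 + r) / (r ^+ 4 + r ^+ 3 + r ^+ 2 + r + 1).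

Definition omegaV {R : realFieldType} (u : 'I_4 -> R) (k : 'I_4) : R :=
  if 0 < u k then limiter (Num.max 0 (u (ord_pred k) / u k))
  else if u k < 0 then limiter (Num.max 0 (u (ordS k) / u k))
  else 0.

Definition matA {R : realFieldType} (u : 'I_4 -> R) : 'M[R]_4 :=
  \matrix_(i < 4, j < 4)
    (if i == j then 1
     else if (0 <= u i) && (j == ord_pred i) then - omegaV u i
     else if (u i < 0) && (j == ordS i) then - omegaV u i
     else 0).

Definition matB {R : realFieldType} (u : 'I_4 -> R) : 'M[R]_4 :=
  \matrix_(i < 4, j < 4)
    (if (0 <= u i) && (j == i) then 1 - omegaV u i
     else if (u i < 0) && (j == ordS i) then 1 - omegaV u i
     else 0).

Definition nonsingular_M_matrix {R : realFieldType} {n : nat} (A : 'M[R]_n) : Prop :=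
  (forall i j, i != j -> A i j <= 0) /\ A \in unitmx /\ (forall i j, 0 <= invmx A i j).

Definition strictly_diag_dominant {R : realFieldType} {n : nat} (A : 'M[R]_n) : Prop :=
  forall i, \sum_(j < n | j != i) `|A i j| < `|A i i|.

(* Main.v *)
Require Import Defs.
From HB Require Import structures.
From mathcomp Require Import all_boot all_order all_algebra.
Import Order.TTheory GRing.Theory Num.Theory.
Local Open Scope ring_scope.
Set Implicit Arguments.

Section S.
Variable R : realFieldType.
Variable u : 'I_4 -> R.

Let w := omegaV u.
Definition nbA (i : 'I_4) := if 0 <= u i then ord_pred i else ordS i.
Definition nbB (i : 'I_4) := if 0 <= u i then i else ordS i.

Lemma nbA_neq i : nbA i != i.
Proof. rewrite /nbA; case: ifP => _; by move: i; case=> [[|[|[|[|]]]]]. Qed.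

Lemma limiter_bnd (r : R) : 0 <= r -> 0 <= limiter r < 1.
Proof.
move=> r0; rewrite /limiter.
set p := _ + r.
have p0 : 0 <= p by rewrite /p !addr_ge0 ?exprn_ge0.
have p1 : 0 < p + 1 by rewrite ltr_wpDl.
rewrite divr_ge0 ?(ltW p1) //=; rewrite (ltr_pdivrMr _ _ p1) mul1r ltrDl //.
Qed.

Lemma w_bnd i : 0 <= w i < 1.
Proof.
rewrite /w /omegaV; case: ifP => _; first by apply: limiter_bnd; rewrite le_max lexx.
case: ifP => _; first by apply: limiter_bnd; rewrite le_max lexx.
by rewrite lexx ltr01.
Qed.

Lemma AE i j : matA u i j = if i == j then 1 else if j == nbA i then - w i else 0.
Proof.
rewrite /matA /nbA mxE; case: (i == j) => //.
by case: (leP 0 (u i)) => _ //=; rewrite andbF.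
Qed.

Lemma BE i j : matB u i j = if j == nbB i then 1 - w i else 0.
Proof.
rewrite /matB /nbB mxE.
by case: (leP 0 (u i)) => _ //=; rewrite andbF.
Qed.

Lemma rowA i (x : 'I_4 -> R) : \sum_j matA u i j * x j = x i - w i * x (nbA i).
Proof.
rewrite (bigD1 i) //= (bigD1 (nbA i)) /=; last by rewrite nbA_neq.
rewrite big1 ?addr0.
  by rewrite !AE eqxx eq_sym (negbTE (nbA_neq i)) eqxx mul1r mulNr.
move=> j /andP [ji jn]; rewrite AE eq_sym (negbTE ji) (negbTE jn) mul0r //.
Qed.

Lemma rowB i (x : 'I_4 -> R) : \sum_j matB u i j * x j = (1 - w i) * x (nbB i).
Proof.
rewrite (bigD1 (nbB i)) //= big1 ?addr0; first by rewrite BE eqxx.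
by move=> j jn; rewrite BE (negbTE jn) mul0r.
Qed.

Lemma maxprinc (x : 'I_4 -> R) :
  (forall i, 0 <= x i - w i * x (nbA i)) -> forall i, 0 <= x i.
Proof.
move=> H.
case: (@arg_minP _ R _ ord0 predT x isT) => m _ Hm.
suff: 0 <= x m by move=> h i; apply: le_trans h (Hm i isT).
rewrite leNgt; apply/negP => xm.
have := H m; rewrite leNgt => /negP; apply.
have := Hm (nbA m) isT; have := w_bnd m; case/andP => w0 w1 hle.
have : x m - w m * x (nbA m) <= x m - w m * x m.
  by rewrite lerD2l lerN2 ler_wpM2l.
move/le_lt_trans; apply.
have -> : x m - w m * x m = (1 - w m) * x m by rewrite mulrBl mul1r.
by rewrite pmulr_rlt0 ?subr_gt0.
Qed.

Lemma unitA : matA u \in unitmx.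
Proof.
rewrite unitmxE unitfE -det_tr; apply/negP => /det0P [v vn0 hv].
apply/negP: vn0; rewrite negbK; apply/eqP/matrixP => z j; rewrite ord1 !mxE.
have key : forall i, \sum_j matA u i j * v 0 j = 0.
  move=> i; rewrite -[RHS](_ : (v *m (matA u)^T) 0 i = 0); last by rewrite hv mxE.
  by rewrite mxE; apply: eq_bigr => k _; rewrite mulrC [(_^T) _ _]mxE.
have p1 : forall i, 0 <= v 0 i.
  by apply: (@maxprinc (fun j => v 0 j)) => i; rewrite -(rowA i (fun j => v 0 j)) key.
have p2 : forall i, 0 <= - v 0 i.
  apply: (@maxprinc (fun j => - v 0 j)) => i.
  rewrite -(rowA i (fun j => - v 0 j)).
  by rewrite (eq_bigr (fun k => - (matA u i k * v 0 k))) ?sumrN ?key ?oppr0 // => k _; rewrite mulrN.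
by apply/eqP; rewrite eq_le p1 andbT -oppr_ge0 p2.
Qed.

Lemma invA_ge0 i j : 0 <= invmx (matA u) i j.
Proof.
have h := mulmxV unitA.
pose x k := invmx (matA u) k j.
apply: (@maxprinc x) => k.
rewrite -(rowA k x); have := congr1 (fun M : 'M_4 => M k j) h; rewrite /= mxE => ->.
by rewrite mxE ler0n.
Qed.

End S.

Theorem mainTheorem2 (R : realFieldType) (u : 'I_4 -> R) :
  nonsingular_M_matrix (matA u) /\
  strictly_diag_dominant (matA u) /\
  (forall i j, 0 <= invmx (matA u) i j) /\
  (forall i j, 0 <= (invmx (matA u) *m matB u) i j) /\
  (forall i, \sum_(j < 4) (invmx (matA u) *m matB u) i j = 1).
Proof.
have Hw := w_bnd _ u.
split; [|split; [|split; [|split]]].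
- split; [|split; [exact: unitA | exact: invA_ge0]].
  move=> i j ij; rewrite AE (negbTE ij); case: ifP => _ //.
  by rewrite oppr_le0; case/andP: (Hw i).
- move=> i; rewrite (bigD1 (nbA _ u i)) /=; last by rewrite nbA_neq.
  rewrite big1 ?addr0.
    by rewrite !AE eqxx eq_sym (negbTE (nbA_neq _ u i)) eqxx normrN normr1 ger0_norm;
      case/andP: (Hw i).
  by move=> j /andP [ji jn]; rewrite AE eq_sym (negbTE ji) (negbTE jn) normr0.
- exact: invA_ge0.
- move=> i j; rewrite mxE; apply: sumr_ge0 => k _; apply: mulr_ge0; first exact: invA_ge0.
  rewrite BE; case: ifP => _ //; by rewrite subr_ge0; case/andP: (Hw k) => _ /ltW.
- move=> i.
  have h := mulVmx (unitA _ u).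
  have e : forall k, \sum_j matB u k j = \sum_j matA u k j.
    move=> k; have hb := rowB _ u k (fun _ => 1); have ha := rowA _ u k (fun _ => 1).
    rewrite /= in ha hb.
    have e1 : \sum_j matB u k j = \sum_j matB u k j * 1 by apply: eq_bigr => *; rewrite mulr1.
    have e2 : \sum_j matA u k j = \sum_j matA u k j * 1 by apply: eq_bigr => *; rewrite mulr1.
    by rewrite e1 e2 hb ha !mulr1.
  transitivity (\sum_j (invmx (matA u) *m matA u) i j); last first.
    by rewrite h (bigD1 i) //= big1 ?addr0 ?mxE ?eqxx // => j ji; rewrite mxE eq_sym (negbTE ji).
  rewrite (eq_bigr (fun j => \sum_k invmx (matA u) i k * matB u k j)); last by move=> *; rewrite mxE.
  rewrite exchange_big /= [RHS](eq_bigr (fun j => \sum_k invmx (matA u) i k * matA u k j)); last by move=> *; rewrite mxE.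
  rewrite [RHS]exchange_big /=; apply: eq_bigr => k _.
  by rewrite -!mulr_sumr e.
Qed.
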